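(* Let $\mathcal G=(\mathcal V,\mathcal E)$ be a $k$-uniform hypergraph with $|\mathcal V|=n$, $|\mathcal E|=m\ge1$, in which every vertex lies in exactly $\Delta$ hyperedges. Let $H=\sum_{\eta\in\mathcal E}H_\eta$ be a local Hamiltonian on $(\mathbb C^d)^{\otimes n}$ with each $H_\eta$ Hermitian, acting only on the qudits in $\eta$, and $\|H_\eta\|\le1$. Let $h=\frac1mH$ and let $\nu_h$ be its empirical spectral distribution. Then \[\operatorname{Var}(\nu_h)=\int t^2\,d\nu_h(t)-\Big(\int t\,d\nu_h(t)\Big)^2\le \frac{4k^2}{n}.\]
   Context: $H_\eta$ stands for $H_\eta\otimes I$. The empirical spectral distribution of a Hermitian operator $A$ on a $D$-dimensional space is $\nu_A=\frac1D\sum_{i=1}^D\delta_{\lambda_i(A)}$, with eigenvalues counted with multiplicity. *)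

(* Defs.v *)
From HB Require Import structures.
From mathcomp Require Import all_boot all_order all_algebra.
From mathcomp Require Import complex.
Set Implicit Arguments. Unset Strict Implicit. Unset Printing Implicit Defensive.
Import Order.TTheory GRing.Theory Num.Theory.
Local Open Scope ring_scope.

(* Computational basis of (C^d)^{(x) n}: configurations 'I_n -> 'I_d. *)
Definition config (n d : nat) := {ffun 'I_n -> 'I_d}.
Definition qdim (n d : nat) : nat := #|{: config n d}|.
Definition conf {n d : nat} (i : 'I_(qdim n d)) : config n d := enum_val i.

Definition adjoint {C : numClosedFieldType} {D : nat} (A : 'M[C]_D) : 'M[C]_D :=
  (map_mx Num.conj A)^T.
Definition is_hermitian_op {C : numClosedFieldType} {D : nat} (A : 'M[C]_D) : Prop :=
  adjoint A = A.

Definition opnorm_le {C : numClosedFieldType} {D : nat} (A : 'M[C]_D) (c : C) : Prop :=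
  forall v : 'cV[C]_D,
    \sum_i `|(A *m v) i 0| ^+ 2 <= c ^+ 2 * \sum_i `|v i 0| ^+ 2.

(* A acts only on the qudits in S: A = A_S (x) I, i.e. its matrix entries vanish
   unless the two configurations agree outside S, and they depend only on the
   restrictions of the two configurations to S. *)
Definition agree_on {n d : nat} (S : {set 'I_n}) (x y : config n d) : bool :=
  [forall q in S, x q == y q].
Definition acts_on {C : numClosedFieldType} {n d : nat} (S : {set 'I_n})
    (A : 'M[C]_(qdim n d)) : Prop :=
  (forall i j, ~~ agree_on (~: S) (conf i) (conf j) -> A i j = 0) /\
  (forall i j i' j',
     agree_on (~: S) (conf i) (conf j) -> agree_on (~: S) (conf i') (conf j') ->
     agree_on S (conf i) (conf i') -> agree_on S (conf j) (conf j') ->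
     A i j = A i' j').

Definition eigen_multiset {C : numClosedFieldType} {D : nat} (A : 'M[C]_D) (s : seq C) : Prop :=
  size s = D /\ char_poly A = \prod_(x <- s) ('X - x%:P).

(* Moments of the empirical spectral distribution nu_A = (1/D) sum_i delta_{lambda_i}. *)
Definition esd_moment {C : numClosedFieldType} (s : seq C) (p : nat) : C :=
  (size s)%:R^-1 * \sum_(x <- s) x ^+ p.
Definition esd_var {C : numClosedFieldType} (s : seq C) : C :=
  esd_moment s 2 - (esd_moment s 1) ^+ 2.

(* Main.v *)
Require Import Defs.
From HB Require Import structures.
From mathcomp Require Import all_boot all_order all_algebra.
From mathcomp Require Import complex.
From mathcomp Require Import sesquilinear spectral ring lra zify.
Import Order.TTheory GRing.Theory Num.Theory.

Lemma deg_sum n (E : {set {set 'I_n}}) v :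
  \sum_(f in E) (v \in f) = #|[set e in E | v \in e]|.
Proof.
rewrite -big_mkcondr /= -sum1_card; apply: eq_bigl => f.
by rewrite !inE.
Qed.

Lemma handshake n (E : {set {set 'I_n}}) k Delta :
  (forall e, e \in E -> #|e| = k) -> (forall v, #|[set e in E | v \in e]| = Delta) ->
  n * Delta = #|E| * k.
Proof.
move=> hk hD.
have -> : n * Delta = \sum_(v : 'I_n) #|[set e in E | v \in e]|.
  by rewrite (eq_bigr (fun _ => Delta)) // sum_nat_const card_ord.
under eq_bigr do rewrite -deg_sum.
rewrite exchange_big /= -sum1_card big_distrl /=; apply: eq_bigr => e eE.
rewrite mul1n -(hk e eE) -sum1_card [RHS]big_mkcond /=.
by apply: eq_bigr => i _; case: (i \in e).
Qed.

Lemma count_pairs n (E : {set {set 'I_n}}) k Delta :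
  (forall e, e \in E -> #|e| = k) -> (forall v, #|[set e in E | v \in e]| = Delta) ->
  \sum_(e in E) \sum_(f in E) (e :&: f != set0) <= #|E| * k * Delta.
Proof.
move=> hk hD.
rewrite -sum1_card big_distrl big_distrl /=; apply: leq_sum => e eE.
rewrite mul1n -(hk e eE).
apply: (@leq_trans (\sum_(f in E) \sum_(v in e) (v \in f))).
  apply: leq_sum => f _.
  case: (set_0Vmem (e :&: f)) => [->|[v]]; first by rewrite eqxx.
  rewrite inE => /andP[ve vf].
  rewrite (bigD1 v) //= vf; case: (_ != _) => //; exact: leq_addr.
rewrite exchange_big /=.
under eq_bigr do rewrite deg_sum hD.
by rewrite sum_nat_const.
Qed.

Local Open Scope ring_scope.

Section Eig.
Local Open Scope sesquilinear_scope.
Lemma char_poly_sim (F : fieldType) (D : nat) (P B : 'M[F]_D) :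
  P \in unitmx -> char_poly (invmx P *m B *m P) = char_poly B.
Proof.
move=> Pu.
pose f := @map_mx F {poly F} (@polyC F) D D.
have e1 : f (invmx P) *m f P = 1%:M by rewrite -map_mxM mulVmx // map_mx1.
have e2 : char_poly_mx (invmx P *m B *m P) =
    f (invmx P) *m char_poly_mx B *m f P.
  rewrite /char_poly_mx mulmxBr mulmxBl -!map_mxM; congr (_ - _).
  by rewrite -mulmxA mul_scalar_mx -scalemxAr e1 scalemx1.
rewrite /char_poly e2 !det_mulmx mulrAC -det_mulmx e1 det1 mul1r.
by [].
Qed.

Lemma eig_sums (C : numClosedFieldType) (D : nat) (A : 'M[C]_D) s :
  adjoint A = A -> eigen_multiset A s ->
  \sum_(x <- s) x = \tr A /\ \sum_(x <- s) x ^+ 2 = \tr (A *m A).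
Proof.
move=> hA [_ hs].
have An : A \is normalmx.
  apply/eqP; have -> : A ^t* = A.
    by rewrite -[RHS]hA /adjoint map_trmx.
  by [].
move/orthomx_spectralP: An.
set P := spectralmx A; set sp := spectral_diag A => eA.
have Pu : P \in unitmx by apply: spectral_unit.
have hc : char_poly A = \prod_(x <- [seq sp 0 i | i <- enum 'I_D]) ('X - x%:P).
  rewrite eA char_poly_sim // char_poly_trig ?diag_mx_is_trig //.
  rewrite big_map big_enum /=; apply: eq_bigr => i _; by rewrite mxE eqxx.
have pe : perm_eq s [seq sp 0 i | i <- enum 'I_D].
  by apply: prod_XsubC_eq; rewrite -hs hc.
rewrite !(perm_big _ pe) /= !big_map.
split.
  by rewrite eA mxtrace_mulC mulmxA mulmxV // mul1mx mxtrace_diag.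
rewrite eA.
have -> : invmx P *m diag_mx sp *m P *m (invmx P *m diag_mx sp *m P) =
   invmx P *m (diag_mx sp *m diag_mx sp) *m P.
  by rewrite !mulmxA mulmxK.
rewrite (mxtrace_mulC (invmx P *m _)) !mulmxA mulmxV // mul1mx /mxtrace.
apply: eq_bigr => i _; by rewrite mul_diag_mx !mxE ?eqxx ?mulr1n expr2.
Qed.

End Eig.

Section Fact.
Variables (C : numClosedFieldType) (n d : nat).
Local Notation F := (config n d).
Local Notation D := (qdim n d).

Lemma sum_conf (G : 'I_D -> C) : \sum_(i < D) G i = \sum_(x : F) G (enum_rank x).
Proof.
rewrite (reindex (@enum_rank F)) //.
by exists enum_val => i _; [rewrite enum_rankK | rewrite enum_valK].
Qed.

Lemma conf_rank (x : F) : conf (enum_rank x) = x.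
Proof. by rewrite /conf enum_rankK. Qed.

Definition glue (S : {set 'I_n}) (a b : F) : F :=
  [ffun q => if q \in S then a q else b q].

Lemma trace_fact (S T : {set 'I_n}) (X Y : 'M[C]_D) :
  S :&: T = set0 -> acts_on S X -> acts_on T Y ->
  D%:R * \tr (X *m Y) = \tr X * \tr Y.
Proof.
move=> dST [hX0 hX1] [hY0 hY1].
pose Xc x y := X (enum_rank x) (enum_rank y).
pose Yc x y := Y (enum_rank x) (enum_rank y).
have X0 : forall x y, ~~ agree_on (~: S) x y -> Xc x y = 0.
  by move=> x y h; apply: hX0; rewrite !conf_rank.
have Y0 : forall x y, ~~ agree_on (~: T) x y -> Yc x y = 0.
  by move=> x y h; apply: hY0; rewrite !conf_rank.
have agr : forall (U : {set 'I_n}) (x : F), agree_on U x x.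
  by move=> U x; apply/forall_inP.
have X1 : forall x u, agree_on S x u -> Xc x x = Xc u u.
  by move=> x u h; apply: hX1; rewrite !conf_rank ?agr.
have Y1 : forall x u, agree_on T x u -> Yc x x = Yc u u.
  by move=> x u h; apply: hY1; rewrite !conf_rank ?agr.
have trX : \tr X = \sum_x Xc x x by rewrite /mxtrace sum_conf.
have trY : \tr Y = \sum_x Yc x x by rewrite /mxtrace sum_conf.
have trXY : \tr (X *m Y) = \sum_x Xc x x * Yc x x.
  rewrite /mxtrace sum_conf; apply: eq_bigr => x _.
  rewrite mxE sum_conf (bigD1 x) //= big1 ?addr0 // => y yx.
  have [q xyq] : exists q, x q != y q.
    apply/existsP; apply: contraR yx; rewrite negb_exists => /forallP h.
    apply/eqP/ffunP => q; apply/eqP; rewrite eq_sym.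
    by have := h q; rewrite negbK.
  case: (boolP (q \in S)) => qS.
    have qT : q \notin T.
      apply/negP => qT; have : q \in S :&: T by rewrite inE qS qT.
      by rewrite dST inE.
    rewrite -/(Yc y x) Y0 ?mulr0 //; apply/negP => /forall_inP /(_ q).
    by rewrite inE qT eq_sym (negbTE xyq) => /(_ isT).
  rewrite -/(Xc x y) X0 ?mul0r //; apply/negP => /forall_inP /(_ q).
  by rewrite inE qS (negbTE xyq) => /(_ isT).
rewrite trX trY trXY mulr_natl -sumrMnl.
have -> : \sum_x (Xc x x * Yc x x) *+ D = \sum_x \sum_(y : F) Xc x x * Yc x x.
  by apply: eq_bigr => x _; rewrite sumr_const.
rewrite mulr_suml; under [RHS]eq_bigr do rewrite mulr_sumr.
rewrite !pair_big /=.
pose phi (p : F * F) := (glue S p.1 p.2, glue S p.2 p.1).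
have phiK : involutive phi.
  move=> [a b]; rewrite /phi /glue /=; congr pair; apply/ffunP => q;
  by rewrite !ffunE; case: (q \in S).
rewrite (reindex_inj (inv_inj phiK)) /=; apply: eq_bigr => [[a b]] _ /=.
congr (_ * _).
  apply: X1; apply/forall_inP => q qS; by rewrite /glue ffunE qS.
apply: Y1; apply/forall_inP => q qT; rewrite /glue ffunE.
have -> : (q \in S) = false.
  apply/negP => qS; have : q \in S :&: T by rewrite inE qS qT.
  by rewrite dST inE.
by [].
Qed.
End Fact.

Section Herm.
Variables (C : numClosedFieldType) (D : nat).
Implicit Types X Y Z : 'M[C]_D.

Lemma hermP X : is_hermitian_op X <-> forall i j, X i j = (X j i)^*.
Proof.
split=> [h i j | h].
  by rewrite -[in LHS]h /adjoint !mxE.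
by rewrite /is_hermitian_op; apply/matrixP => i j; rewrite /adjoint !mxE h conjCK.
Qed.

Lemma tr_shift X Y a b :
  \tr ((X - a%:M) *m (Y - b%:M)) =
  \tr (X *m Y) - b * \tr X - a * \tr Y + a * b * D%:R.
Proof.
rewrite mulmxBl !mulmxBr mul_mx_scalar mul_scalar_mx -scalar_mxM.
rewrite !raddfB /= !linearZ /= mxtrace_scalar -mulr_natr.
by ring.
Qed.

Lemma herm_B X Y : is_hermitian_op X -> is_hermitian_op Y ->
  is_hermitian_op (X - Y).
Proof.
move=> /hermP hX /hermP hY; apply/hermP => i j.
by rewrite !mxE hX hY rmorphB.
Qed.

Lemma herm_tr_real X : is_hermitian_op X -> (\tr X)^* = \tr X.
Proof.
move=> /hermP h; rewrite /mxtrace rmorph_sum; apply: eq_bigr => i _.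
by rewrite [in RHS]h.
Qed.

Lemma herm_scalar X a : is_hermitian_op X -> a^* = a ->
  is_hermitian_op (X - a%:M).
Proof.
move=> hX ha; apply: herm_B => //; apply/hermP => i j.
rewrite !mxE; case: (i =P j) => [->|/eqP ij]; first by rewrite eqxx /= !mulr1n ha.
by rewrite eq_sym (negbTE ij) !mulr0n rmorph0.
Qed.

Lemma trsq_ge0 Z : is_hermitian_op Z -> 0 <= \tr (Z *m Z).
Proof.
move=> /hermP h; rewrite /mxtrace; apply: sumr_ge0 => i _.
rewrite mxE; apply: sumr_ge0 => j _.
by rewrite (h j i) -normCK exprn_ge0.
Qed.

Lemma tr_cross X Y : is_hermitian_op X -> is_hermitian_op Y ->
  2%:R * \tr (X *m Y) <= \tr (X *m X) + \tr (Y *m Y).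
Proof.
move=> hX hY; have := @trsq_ge0 _ (herm_B X Y hX hY : is_hermitian_op (X - Y)).
rewrite mulmxBl !mulmxBr !raddfB /= (mxtrace_mulC Y X).
set p := \tr (X *m X); set q := \tr (Y *m Y); set r := \tr (X *m Y).
move=> h; rewrite -subr_ge0.
suff e : p + q - 2%:R * r = p - r + (- r - - q) by rewrite e.
by ring.
Qed.

Lemma trHH_le X : is_hermitian_op X -> opnorm_le X 1 -> \tr (X *m X) <= D%:R.
Proof.
move=> /hermP h hn; rewrite /mxtrace.
under eq_bigr do rewrite mxE.
rewrite exchange_big /=.
have -> : (D%:R : C) = \sum_(j < D) 1 by rewrite sumr_const card_ord.
apply: ler_sum => j _.
pose v : 'cV[C]_D := delta_mx j 0.
have := hn v.
have -> : \sum_i `|(X *m v) i 0| ^+ 2 = \sum_i X i j * X j i.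
  apply: eq_bigr => i _.
  have -> : (X *m v) i 0 = X i j.
    rewrite mxE (bigD1 j) //= big1 ?addr0 => [|k kj].
      by rewrite mxE !eqxx mulr1.
    by rewrite mxE (negbTE kj) mulr0.
  by rewrite normCK (h j i).
suff -> : \sum_i `|v i 0| ^+ 2 = (1 : C) by rewrite expr1n mul1r.
rewrite (bigD1 j) //= big1 ?addr0 => [|k kj].
  by rewrite mxE !eqxx normr1 expr1n.
by rewrite mxE (negbTE kj) normr0 expr0n.
Qed.

End Herm.

Section Pair.
Variables (C : numClosedFieldType) (D : nat).
Implicit Types X Y : 'M[C]_D.

Lemma shift_sq_le X : (0 < D)%N -> is_hermitian_op X -> opnorm_le X 1 ->
  \tr ((X - (\tr X / D%:R)%:M) *m (X - (\tr X / D%:R)%:M)) <= D%:R.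
Proof.
move=> Dp hX hn; have DR : (D%:R : C) != 0 by rewrite pnatr_eq0 -lt0n.
rewrite tr_shift.
have -> : \tr (X *m X) - \tr X / D%:R * \tr X - \tr X / D%:R * \tr X +
    \tr X / D%:R * (\tr X / D%:R) * D%:R = \tr (X *m X) - \tr X * \tr X / D%:R.
  by field.
apply: le_trans (@trHH_le _ _ X hX hn); rewrite lerBlDr lerDl.
apply: divr_ge0; last exact: ler0n.
by rewrite -{2}(@herm_tr_real _ _ X hX) -normCK exprn_ge0.
Qed.

Lemma real_t X : is_hermitian_op X -> (\tr X / D%:R)^* = \tr X / D%:R.
Proof.
by move=> hX; rewrite rmorphM fmorphV /= conjC_nat (@herm_tr_real _ _ X hX).
Qed.

Lemma pair_le X Y : (0 < D)%N -> is_hermitian_op X -> is_hermitian_op Y ->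
  opnorm_le X 1 -> opnorm_le Y 1 ->
  \tr ((X - (\tr X / D%:R)%:M) *m (Y - (\tr Y / D%:R)%:M)) <= D%:R.
Proof.
move=> Dp hX hY nX nY.
have hBX := @herm_scalar _ _ X _ hX (real_t X hX).
have hBY := @herm_scalar _ _ Y _ hY (real_t Y hY).
have := @tr_cross _ _ _ _ hBX hBY.
set r := \tr (_ *m _).
move=> h.
have h2 : 2%:R * r <= 2%:R * D%:R.
  apply: le_trans h _; rewrite mulr_natl mulr2n.
  by apply: lerD; apply: shift_sq_le.
by rewrite ler_pM2l ?ltr0n in h2.
Qed.

Lemma pair_disj X Y : D%:R != 0 :> C ->
  D%:R * \tr (X *m Y) = \tr X * \tr Y ->
  \tr ((X - (\tr X / D%:R)%:M) *m (Y - (\tr Y / D%:R)%:M)) = 0.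
Proof.
move=> DR h; rewrite tr_shift.
have -> : \tr (X *m Y) = \tr X * \tr Y / D%:R.
  by rewrite -h mulrC mulrA mulVf ?mul1r.
by field.
Qed.

End Pair.

Theorem mainTheorem5 (R : rcfType) (n d k m Delta : nat)
  (E : {set {set 'I_n}})
  (H : {set 'I_n} -> 'M[R[i]]_(qdim n d)) :
  (forall e, e \in E -> #|e| = k) ->
  #|E| = m -> (1 <= m)%N ->
  (forall v : 'I_n, #|[set e in E | v \in e]| = Delta) ->
  (forall e, e \in E -> is_hermitian_op (H e)) ->
  (forall e, e \in E -> acts_on e (H e)) ->
  (forall e, e \in E -> opnorm_le (H e) 1) ->
  forall s : seq R[i],
    eigen_multiset ((m%:R)^-1 *: \sum_(e in E) H e) s ->
    esd_var s <= 4%:R * (k%:R) ^+ 2 / n%:R.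
Proof.
move=> hk hm m1 hD hH hA hN s [hs hc].
have hsh := @handshake _ _ _ _ hk hD.
have hcp := @count_pairs _ _ _ _ hk hD.
rewrite hm in hsh hcp.
set N := (\sum_(e in E) \sum_(f in E) (e :&: f != set0))%N in hcp.
have [D0|Dp] := posnP (qdim n d).
  move: hs; rewrite D0 => /size0nil ->.
  rewrite /esd_var /esd_moment /= !big_nil mulr0 expr0n /= subr0.
  by rewrite divr_ge0 ?mulr_ge0 ?exprn_ge0 ?ler0n.
set D := qdim n d in Dp hs hc hA hN hH *.
have DR : (D%:R : R[i]) != 0 by rewrite pnatr_eq0 -lt0n.
have mR : (m%:R : R[i]) != 0 by rewrite pnatr_eq0 -lt0n.
set M := \sum_(e in E) H e in hc *.
have hermA : adjoint (m%:R^-1 *: M) = m%:R^-1 *: M.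
  apply/hermP => i j; rewrite !mxE !summxE rmorphM fmorphV /= conjC_nat rmorph_sum.
  congr (_ * _); apply: eq_bigr => e eE.
  by have /hermP := hH e eE.
have [h1 h2] := @eig_sums _ _ _ s hermA (conj hs hc).
pose te e := \tr (H e) / D%:R.
pose B e := H e - (te e)%:M.
pose T := \sum_(e in E) te e.
set Bs := \sum_(e in E) B e.
have hM : M = Bs - (- T)%:M.
  by rewrite /Bs /B sumrB raddfN opprK /= /T (raddf_sum (@scalar_mx _ D)) subrK.
have trB : \tr Bs = 0.
  rewrite /Bs raddf_sum big1 // => e _.
  by rewrite /B raddfB /= mxtrace_scalar /te -[_ / _ *+ _]mulr_natr divfK // subrr.
have trM : \tr M = T * D%:R.
  by rewrite hM raddfB /= trB mxtrace_scalar -[_ *+ _]mulr_natr sub0r mulNr opprK.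
have trMM : \tr (M *m M) = \tr (Bs *m Bs) + T * T * D%:R.
  by rewrite hM tr_shift trB; ring.
have eq1 : esd_var s = (m%:R^-1) ^+ 2 * D%:R^-1 * \tr (Bs *m Bs).
  rewrite /esd_var /esd_moment hs.
  have e1 : \sum_(x <- s) x ^+ 1 = \sum_(x <- s) x by apply: eq_bigr => x _; rewrite expr1.
  rewrite e1.
  rewrite h1 h2 -scalemxAl -scalemxAr !linearZ /= trMM trM.
  by rewrite /GRing.scale /=; field; rewrite DR mR.
rewrite eq1.
have trBB : \tr (Bs *m Bs) = \sum_(e in E) \sum_(f in E) \tr (B e *m B f).
  rewrite /Bs mulmx_suml raddf_sum; apply: eq_bigr => e _.
  by rewrite mulmx_sumr raddf_sum.
have le1 : \tr (Bs *m Bs) <= D%:R * N%:R.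
  rewrite trBB /N natr_sum mulr_sumr; apply: ler_sum => e eE.
  rewrite natr_sum mulr_sumr; apply: ler_sum => f fE.
  case: (eqVneq (e :&: f) set0) => [ef|ef].
    rewrite /= mulr0 /B /te.
    by rewrite (@pair_disj _ _ _ _ DR (@trace_fact _ n d e f (H e) (H f) ef (hA e eE) (hA f fE))).
  by rewrite /= mulr1; apply: pair_le => //; [apply: hH | apply: hH | apply: hN | apply: hN].
apply: le_trans (ler_wpM2l _ le1) _.
  by rewrite mulr_ge0 ?exprn_ge0 ?invr_ge0 ?ler0n.
have -> : (m%:R^-1) ^+ 2 * D%:R^-1 * (D%:R * N%:R) = N%:R / (m%:R ^+ 2) :> R[i].
  by field; rewrite ?DR ?mR.
have [n0|np] := posnP n.
  rewrite n0 mul0n in hsh.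
  have k0 : k = 0%N by nia.
  have N0 : N = 0%N by rewrite k0 muln0 mul0n leqn0 in hcp; apply/eqP.
  by rewrite N0 k0 n0 !mul0r expr0n mulr0 mul0r.
rewrite ler_pdivlMr ?exprn_gt0 ?ltr0n //.
rewrite mulrAC ler_pdivrMr ?exprn_gt0 ?ltr0n //.
rewrite -!natrX -!natrM ler_nat.
nia.
Qed.
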